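(* Let $\mathcal{A}=\{n\in\mathbb{N}_{\ge1} : V(n+1)/V(n)>1\}$ and $\mathcal{B}=\{n\in\mathbb{N}_{\ge1} : V(n+1)/V(n)<1\}$ (both sets are infinite). Then $$\liminf_{n\to\infty,\ n\in\mathcal{A}}\frac{V(n+1)}{V(n)}=1 \quad\text{and}\quad \limsup_{n\to\infty,\ n\in\mathcal{B}}\frac{V(n+1)}{V(n)}=1.$$
   Context: For a positive integer $n$, an integer $a$ is called regular modulo $n$ if there exists an integer $x$ with $a^2x\equiv a \pmod n$. Let $V(n)$ denote the number of integers $a$ with $1\le a\le n$ that are regular modulo $n$. (Known fact: $V$ is multiplicative, $V(1)=1$, and $V(p^{\alpha})=p^{\alpha}-p^{\alpha-1}+1$ for a prime $p$ and $\alpha\ge1$.) *)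

(* Defs.v *)
From Stdlib Require Import Reals ZArith Arith List ClassicalEpsilon.
Open Scope R_scope.

Definition regular (n : nat) (a : Z) : Prop :=
  exists x : Z, (Z.of_nat n | a * a * x - a)%Z.

Definition V (n : nat) : nat :=
  length (filter (fun a : nat =>
            if excluded_middle_informative (regular n (Z.of_nat a)) then true else false)
          (seq 1 n)).

Definition ratio (n : nat) : R := INR (V (n + 1)) / INR (V n).

Definition is_lower_bound (E : R -> Prop) (m : R) : Prop := forall x, E x -> m <= x.
Definition is_glb (E : R -> Prop) (m : R) : Prop :=
  is_lower_bound E m /\ (forall b, is_lower_bound E b -> b <= m).

Definition tail_vals (P : nat -> Prop) (f : nat -> R) (N : nat) : R -> Prop :=
  fun z => exists n, (N <= n)%nat /\ P n /\ z = f n.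

Definition is_liminf_on (P : nat -> Prop) (f : nat -> R) (l : R) : Prop :=
  is_lub (fun y => exists N, is_glb (tail_vals P f N) y) l.

Definition is_limsup_on (P : nat -> Prop) (f : nat -> R) (l : R) : Prop :=
  is_glb (fun y => exists N, is_lub (tail_vals P f N) y) l.

Definition setA (n : nat) : Prop := (1 <= n)%nat /\ ratio n > 1.
Definition setB (n : nat) : Prop := (1 <= n)%nat /\ ratio n < 1.

Definition infinite_nat_set (P : nat -> Prop) : Prop :=
  forall N, exists n, (N <= n)%nat /\ P n.

(* Main.v *)
Require Import Defs.
From Stdlib Require Import Reals ZArith Lia List Znumtheory Bool ClassicalEpsilon Lra.
From mathcomp Require ssrbool ssrnat div prime.
Open Scope bool_scope.
Open Scope nat_scope.
Open Scope Z_scope.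

Lemma reg_of_cond (n : nat) (a : Z) : (0 < n)%nat ->
  (forall e, (e | a) -> (e * e | Z.of_nat n) -> Z.abs e = 1) -> regular n a.
Proof.
  intros Hn H. unfold regular. set (N := Z.of_nat n).
  change (Z.of_nat n) with N in H.
  assert (HN : 0 < N) by (unfold N; lia).
  set (g := Z.gcd a N).
  destruct (Z.gcd_divide_r a N) as [h Hh]. fold g in Hh.
  destruct (Z.gcd_divide_l a N) as [a' Ha]. fold g in Ha.
  assert (He : Z.gcd g h = 1).
  { assert (E := H (Z.gcd g h)).
    assert (Z.abs (Z.gcd g h) = 1).
    { apply E.
      - apply Z.divide_trans with g. apply Z.gcd_divide_l. exists a'. exact Ha.
      - rewrite Hh. rewrite (Z.mul_comm h g). destruct (Z.gcd_divide_l g h) as [k1 K1]. destruct (Z.gcd_divide_r g h) as [k2 K2].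
        exists (k1 * k2). set (d := Z.gcd g h) in *. rewrite K1, K2. ring. }
    pose proof (Z.gcd_nonneg g h). lia. }
  assert (Hc : Z.gcd a h = 1).
  { assert (D1 : (Z.gcd a h | g)).
    { apply Z.gcd_greatest. apply Z.gcd_divide_l.
      apply Z.divide_trans with h. apply Z.gcd_divide_r. exists g. lia. }
    assert (D2 : (Z.gcd a h | Z.gcd g h)).
    { apply Z.gcd_greatest. exact D1. apply Z.gcd_divide_r. }
    rewrite He in D2. apply Z.divide_1_r_nonneg. apply Z.gcd_nonneg. exact D2. }
  destruct (Z.gcd_bezout a h 1 Hc) as [u [v Huv]].
  exists u. exists (- (a' * v)).
  assert (E1 : a * a * u - a = a * (u * a - 1)) by ring.
  rewrite E1. assert (E2 : u * a - 1 = - (v * h)) by lia. rewrite E2.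
  rewrite Hh, Ha. ring.
Qed.

Lemma nonreg (n : nat) (a p : Z) : (p * p | Z.of_nat n) -> (p | a) -> ~ (p * p | a) ->
  ~ regular n a.
Proof.
  intros Hpn Hpa Hnot [x Hx]. apply Hnot.
  destruct Hpa as [k Hk].
  assert (R1 : rel_prime (a * x - 1) p).
  { apply bezout_rel_prime. apply Bezout_intro with (-1) (k * x). subst a. ring. }
  assert (R2 : rel_prime (p * p) (a * x - 1)).
  { apply rel_prime_sym. apply rel_prime_mult; exact R1. }
  apply Gauss with (a * x - 1). 2: exact R2.
  apply Z.divide_trans with (Z.of_nat n). exact Hpn.
  replace ((a * x - 1) * a) with (a * a * x - a) by ring. exact Hx.
Qed.
Open Scope nat_scope.
Lemma filter_split {A} (f : A -> bool) l :
  length (filter f l) + length (filter (fun x => negb (f x)) l) = length l.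
Proof. induction l as [|x l IH]; simpl; [reflexivity|]. destruct (f x); simpl; lia. Qed.

Lemma filter_mono {A} (f g : A -> bool) l :
  (forall x, In x l -> g x = true -> f x = true) ->
  length (filter g l) <= length (filter f l).
Proof.
  induction l as [|x l IH]; simpl; intros H; [lia|].
  assert (IH' := IH (fun y Hy => H y (or_intror Hy))).
  destruct (g x) eqn:G.
  - rewrite (H x (or_introl eq_refl) G). simpl. lia.
  - destruct (f x); simpl; lia.
Qed.

Lemma filter_union {A} (f g : A -> bool) l :
  length (filter (fun x => f x || g x) l) <= length (filter f l) + length (filter g l).
Proof. induction l as [|x l IH]; simpl; [lia|]. destruct (f x), (g x); simpl; lia. Qed.

Lemma filter_all {A} (f : A -> bool) l : (forall x, In x l -> f x = true) -> filter f l = l.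
Proof.
  induction l as [|x l IH]; simpl; intros H; [reflexivity|].
  rewrite (H x (or_introl eq_refl)). f_equal. apply IH. intros; apply H; auto.
Qed.

Lemma exists_false {A} (f : A -> bool) l : length (filter f l) < length l ->
  exists x, In x l /\ f x = false.
Proof.
  intros H. destruct (List.existsb (fun x => negb (f x)) l) eqn:E.
  - apply existsb_exists in E. destruct E as [x [Hx Fx]]. exists x. split; auto.
    destruct (f x); auto; discriminate.
  - exfalso. rewrite filter_all in H. lia.
    intros x Hx. destruct (f x) eqn:F; auto.
    assert (existsb (fun x => negb (f x)) l = true). { apply existsb_exists. exists x. rewrite F. auto. }
    congruence.
Qed.

Lemma nodup_map_inj {A B} (h : A -> B) l : NoDup l ->
  (forall x y, In x l -> In y l -> h x = h y -> x = y) -> NoDup (map h l).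
Proof.
  induction l as [|x l IH]; simpl; intros Hn Hi; constructor.
  - inversion Hn; subst. intros Hin. apply in_map_iff in Hin. destruct Hin as [y [Hy Hy']].
    assert (y = x) by (apply Hi; auto). subst. contradiction.
  - inversion Hn; subst. apply IH; auto.
Qed.

Lemma inj_count {A} (h : A -> nat) l K : NoDup l ->
  (forall x y, In x l -> In y l -> h x = h y -> x = y) ->
  (forall x, In x l -> h x < K) -> length l <= K.
Proof.
  intros Hn Hi Hb. rewrite <- (length_map h l).
  replace K with (length (seq 0 K)) by apply length_seq.
  apply NoDup_incl_length. apply nodup_map_inj; auto.
  intros y Hy. apply in_map_iff in Hy. destruct Hy as [x [<- Hx]]. apply in_seq. specialize (Hb x Hx). lia.
Qed.

Lemma count_mult (p M : nat) : 0 < p ->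
  length (filter (fun a => a mod p =? 0) (seq 1 M)) <= M / p.
Proof.
  intros Hp. apply inj_count with (h := fun a => a / p - 1).
  - apply NoDup_filter. apply seq_NoDup.
  - intros x y Hx Hy E. apply filter_In in Hx, Hy. destruct Hx as [Hx Mx]. destruct Hy as [Hy My].
    apply Nat.eqb_eq in Mx, My. apply in_seq in Hx, Hy.
    assert (X := Nat.div_mod_eq x p). assert (Y := Nat.div_mod_eq y p).
    assert (1 <= x / p). { destruct (x / p); lia. }
    assert (1 <= y / p). { destruct (y / p); lia. }
    assert (x / p = y / p) by lia. rewrite Mx in X. rewrite My in Y. rewrite X, Y. lia.
  - intros x Hx. apply filter_In in Hx. destruct Hx as [Hx Mx]. apply Nat.eqb_eq in Mx. apply in_seq in Hx.
    assert (X := Nat.div_mod_eq x p). rewrite Mx in X.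
    assert (x / p <= M / p) by (apply Nat.Div0.div_le_mono; lia).
    assert (1 <= x / p). { destruct (x / p); lia. } lia.
Qed.

Definition regb (n a : nat) : bool :=
  if excluded_middle_informative (regular n (Z.of_nat a)) then true else false.

Lemma V_eq n : V n = length (filter (regb n) (seq 1 n)).
Proof. reflexivity. Qed.

Lemma V_full n : (forall a, 1 <= a <= n -> regular n (Z.of_nat a)) -> V n = n.
Proof.
  intros H. rewrite V_eq, filter_all. apply length_seq.
  intros a Ha. apply in_seq in Ha. unfold regb.
  destruct excluded_middle_informative as [_|C]; auto. exfalso. apply C, H. lia.
Qed.

Lemma V_lower n (g : nat -> bool) :
  (forall a, 1 <= a <= n -> g a = true -> regular n (Z.of_nat a)) ->
  length (filter g (seq 1 n)) <= V n.
Proof.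
  intros H. rewrite V_eq. apply filter_mono. intros a Ha Ga. apply in_seq in Ha. unfold regb.
  destruct excluded_middle_informative as [_|C]; auto. exfalso. apply C, H; auto; lia.
Qed.

Lemma V_upper n (l0 : list nat) : NoDup l0 ->
  (forall a, In a l0 -> 1 <= a <= n /\ ~ regular n (Z.of_nat a)) -> V n + length l0 <= n.
Proof.
  intros Hn H. rewrite V_eq.
  assert (length l0 <= length (filter (fun x => negb (regb n x)) (seq 1 n))).
  { apply NoDup_incl_length; auto. intros a Ha. destruct (H a Ha) as [Ha1 Ha2].
    apply filter_In. split. apply in_seq; lia. unfold regb.
    destruct excluded_middle_informative; auto; contradiction. }
  pose proof (filter_split (regb n) (seq 1 n)). rewrite length_seq in H1. lia.
Qed.
Definition dv (q x : Z) : bool := Z.eqb (x mod q) 0.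

Lemma dv_iff q x : (0 < q)%Z -> (dv q x = true <-> (q | x)%Z).
Proof. intros Hq. unfold dv. rewrite Z.eqb_eq. apply Z.mod_divide. lia. Qed.

Lemma count_sol (c b : Z) (q J : nat) : 0 < q ->
  (forall j, (Z.of_nat q | c * Z.of_nat j + b)%Z -> Z.gcd (Z.of_nat q) c = 1%Z) ->
  length (filter (fun j => dv (Z.of_nat q) (c * Z.of_nat j + b)) (seq 0 J)) <= J / q + 1.
Proof.
  intros Hq Hg. apply inj_count with (h := fun j => j / q).
  - apply NoDup_filter. apply seq_NoDup.
  - intros x y Hx Hy E. apply filter_In in Hx, Hy. destruct Hx as [_ Hx]. destruct Hy as [_ Hy].
    apply dv_iff in Hx; [|lia]. apply dv_iff in Hy; [|lia].
    assert (R : rel_prime (Z.of_nat q) c) by (apply Zgcd_1_rel_prime; apply (Hg x Hx)).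
    assert (D : (Z.of_nat q | c * (Z.of_nat y - Z.of_nat x))%Z).
    { replace (c * (Z.of_nat y - Z.of_nat x))%Z with ((c * Z.of_nat y + b) - (c * Z.of_nat x + b))%Z by ring.
      apply Z.divide_sub_r; auto. }
    apply Gauss in D; auto. destruct D as [k Hk].
    assert (X := Nat.div_mod_eq x q). assert (Y := Nat.div_mod_eq y q).
    assert (x mod q < q) by (apply Nat.mod_upper_bound; lia).
    assert (y mod q < q) by (apply Nat.mod_upper_bound; lia).
    simpl in E. rewrite E in X.
    assert (Hk' : (Z.of_nat y - Z.of_nat x = Z.of_nat (y mod q) - Z.of_nat (x mod q))%Z) by lia.
    assert (k = 0)%Z by nia. subst k. lia.
  - intros x Hx. apply filter_In in Hx. destruct Hx as [Hx _]. apply in_seq in Hx.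
    assert (x / q <= J / q) by (apply Nat.Div0.div_le_mono; lia). lia.
Qed.

Definition ds (K : nat) : list nat := map (fun k => 2 * k + 3) (seq 0 K).

Definition psum (l : list nat) : nat := fold_right Nat.add 0 l.

Lemma count_exists (P : nat -> nat -> bool) (dl l : list nat) :
  length (filter (fun j => existsb (P j) dl) l) <= psum (map (fun d => length (filter (fun j => P j d) l)) dl).
Proof.
  induction dl as [|d dl IH]; simpl.
  - clear. induction l; simpl; auto.
  - pose proof (filter_union (fun j => P j d) (fun j => existsb (P j) dl) l). simpl in H. lia.
Qed.

Lemma psum_app l1 l2 : psum (l1 ++ l2) = psum l1 + psum l2.
Proof. induction l1; simpl; auto. unfold psum in *; simpl. lia. Qed.

Lemma tele (J K : nat) : 4 * (K + 1) * psum (map (fun k => J / ((2*k+3)*(2*k+3))) (seq 0 K)) <= K * J.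
Proof.
  induction K as [|K IH]; [simpl; lia|].
  rewrite seq_S, map_app, psum_app.
  set (S := psum (map _ (seq 0 K))) in *. cbn [psum map fold_right]. 
  replace (0 + K) with K by lia. set (t := J / _).
  assert (Ht : (2*K+3)*(2*K+3) * t <= J) by (apply Nat.Div0.mul_div_le).
  assert (4 * (K+1) * (K+2) * (S + (t + 0)) <= (K+1)*(K+1) * J) by nia.
  nia.
Qed.

Lemma psum_le {A} (f g : A -> nat) l : (forall x, In x l -> f x <= g x) -> psum (map f l) <= psum (map g l).
Proof. induction l; simpl; intros H; [lia|]. unfold psum in *; simpl. 
  assert (f a <= g a) by auto. assert (fold_right Nat.add 0 (map f l) <= fold_right Nat.add 0 (map g l)) by (apply IHl; auto). lia. Qed.

Lemma psum_lin (a : nat -> nat) l : psum (map (fun k => 2 * (a k + 1)) l) = 2 * psum (map a l) + 2 * length l.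
Proof. induction l; simpl; auto. unfold psum in *; simpl in *. rewrite IHl. lia. Qed.

Lemma density (c1 b1 c2 b2 : Z) (C N0 : nat) : 1 <= C ->
  (forall j, 0 < c1 * Z.of_nat j + b1 <= Z.of_nat C * (Z.of_nat j + 1))%Z ->
  (forall j, 0 < c2 * Z.of_nat j + b2 <= Z.of_nat C * (Z.of_nat j + 1))%Z ->
  (forall k j, (Z.of_nat ((2*k+3)*(2*k+3)) | c1 * Z.of_nat j + b1)%Z -> Z.gcd (Z.of_nat ((2*k+3)*(2*k+3))) c1 = 1%Z) ->
  (forall k j, (Z.of_nat ((2*k+3)*(2*k+3)) | c2 * Z.of_nat j + b2)%Z -> Z.gcd (Z.of_nat ((2*k+3)*(2*k+3))) c2 = 1%Z) ->
  exists j, N0 <= j /\ forall k, ~ (Z.of_nat ((2*k+3)*(2*k+3)) | c1 * Z.of_nat j + b1)%Z /\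
                                 ~ (Z.of_nat ((2*k+3)*(2*k+3)) | c2 * Z.of_nat j + b2)%Z.
Proof.
  intros HC B1 B2 G1 G2.
  set (T := 4 * C + 2 * N0 + 1). set (J := T * T). set (K := C * T).
  set (P := fun j d => dv (Z.of_nat (d*d)) (c1 * Z.of_nat j + b1) || dv (Z.of_nat (d*d)) (c2 * Z.of_nat j + b2)).
  set (badb := fun j => (j <? N0) || existsb (P j) (ds K)).
  assert (Hcount : length (filter badb (seq 0 J)) < length (seq 0 J)).
  { rewrite length_seq.
    assert (E1 : length (filter (fun j => j <? N0) (seq 0 J)) <= N0).
    { apply inj_count with (h := fun j => j).
      - apply NoDup_filter, seq_NoDup.
      - auto.
      - intros x Hx. apply filter_In in Hx. destruct Hx as [_ Hx]. apply Nat.ltb_lt in Hx. exact Hx. }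
    assert (E2 := count_exists P (ds K) (seq 0 J)).
    assert (E3 : psum (map (fun d => length (filter (fun j => P j d) (seq 0 J))) (ds K)) <=
                 psum (map (fun k => 2 * (J / ((2*k+3)*(2*k+3)) + 1)) (seq 0 K))).
    { unfold ds. rewrite map_map. apply psum_le. intros k _.
      unfold P. eapply Nat.le_trans. apply filter_union.
      assert (Hq : 0 < (2*k+3)*(2*k+3)) by (apply Nat.mul_pos; lia).
      pose proof (count_sol c1 b1 ((2*k+3)*(2*k+3)) J Hq (G1 k)).
      pose proof (count_sol c2 b2 ((2*k+3)*(2*k+3)) J Hq (G2 k)). lia. }
    rewrite psum_lin, length_seq in E3.
    assert (E4 := tele J K).
    set (S := psum (map (fun k : nat => J / ((2 * k + 3) * (2 * k + 3))) (seq 0 K))) in E3, E4.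
    assert (E5 : 4 * S <= J).
    { apply (Nat.mul_le_mono_pos_l _ _ (K+1)). lia.
      assert (K * J <= (K+1) * J) by (apply Nat.mul_le_mono_r; lia).
      replace ((K+1)*(4*S)) with (4*(K+1)*S) by ring. lia. }
    assert (E6 : length (filter badb (seq 0 J)) <= N0 + 2 * S + 2 * K).
    { unfold badb. eapply Nat.le_trans. apply filter_union. lia. }
    assert (2 * N0 + 4 * K < J).
    { unfold J, K. assert (T * T = (4 * C + 2 * N0 + 1) * T) by reflexivity.
      assert (1 <= T) by (unfold T; lia). nia. }
    lia. }
  destruct (exists_false badb (seq 0 J) Hcount) as [j [Hj Hb]].
  apply in_seq in Hj. unfold badb in Hb. apply orb_false_iff in Hb. destruct Hb as [Hb1 Hb2].
  apply Nat.ltb_ge in Hb1. exists j. split; [exact Hb1|].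
  intros k.
  destruct (Nat.lt_ge_cases k K) as [Hk|Hk].
  - assert (Pf : P j (2*k+3) = false).
    { destruct (P j (2*k+3)) eqn:E; auto. exfalso.
      assert (existsb (P j) (ds K) = true).
      { apply existsb_exists. exists (2*k+3). split; auto. unfold ds. apply in_map_iff. exists k. split; auto. apply in_seq. lia. }
      congruence. }
    unfold P in Pf. apply orb_false_iff in Pf. destruct Pf as [P1 P2].
    assert (Hq : (0 < Z.of_nat ((2*k+3)*(2*k+3)))%Z) by lia.
    split; intros D; apply (dv_iff _ _ Hq) in D; congruence.
  - assert (Hf : forall c b, (0 < c * Z.of_nat j + b <= Z.of_nat C * (Z.of_nat j + 1))%Z ->
                 ~ (Z.of_nat ((2*k+3)*(2*k+3)) | c * Z.of_nat j + b)%Z).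
    { intros c b [F1 F2] D. apply Z.divide_pos_le in D; auto.
      assert (j + 1 <= J) by lia.
      assert (C * (j + 1) <= C * J) by nia.
      assert (HT : 1 <= T) by (unfold T; lia).
      assert (C * T <= k) by exact Hk.
      assert ((2*k+3)*(2*k+3) > C * J).
      { unfold J. assert (C * (T * T) <= (C * T) * T) by lia.
        assert ((C*T)*T <= k * T) by (apply Nat.mul_le_mono_r; lia).
        assert (k * T <= k * (C * T)) by (apply Nat.mul_le_mono_l; nia).
        nia. }
      lia. }
    split; apply Hf; auto.
Qed.
Lemma sqfree_of (f : Z) : (0 < f)%Z -> ~ (4 | f)%Z ->
  (forall k, ~ (Z.of_nat ((2*k+3)*(2*k+3)) | f)%Z) -> forall e, (e * e | f)%Z -> Z.abs e = 1%Z.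
Proof.
  intros Hf H4 Hk e He.
  assert (Eu : (e * e = Z.abs e * Z.abs e)%Z) by (destruct (Z.abs_eq_or_opp e) as [E|E]; rewrite E at 1 2; ring).
  rewrite Eu in He. set (u := Z.abs e) in *. assert (Hu : (0 <= u)%Z) by apply Z.abs_nonneg.
  destruct (Z.Even_or_Odd u) as [[w Hw]|[w Hw]].
  - exfalso. destruct (Z.eq_dec w 0) as [W|W].
    + rewrite Hw, W in He. destruct He as [t Ht]. lia.
    + apply H4. apply Z.divide_trans with (u*u)%Z; auto. exists (w*w)%Z. subst u. rewrite Hw. ring.
  - destruct (Z.eq_dec w 0) as [W|W]. { subst. lia. }
    exfalso. apply (Hk (Z.to_nat (w - 1))).
    replace (Z.of_nat ((2 * Z.to_nat (w - 1) + 3) * (2 * Z.to_nat (w - 1) + 3))) with (u*u)%Z; auto.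
    rewrite Nat2Z.inj_mul. rewrite Nat2Z.inj_add, Nat2Z.inj_mul, Z2Nat.id by lia. rewrite Hw. ring.
Qed.

Lemma odd_gcd4 k : Z.gcd (Z.of_nat ((2*k+3)*(2*k+3))) 4 = 1%Z.
Proof.
  apply Zgcd_1_rel_prime. set (q := Z.of_nat ((2*k+3)*(2*k+3))).
  assert (Hq : q = (2 * (2 * Z.of_nat k * Z.of_nat k + 6 * Z.of_nat k + 4) + 1)%Z) by (unfold q; lia).
  assert (R : rel_prime q 2).
  { apply bezout_rel_prime. apply Bezout_intro with 1%Z (- (2 * Z.of_nat k * Z.of_nat k + 6 * Z.of_nat k + 4))%Z. lia. }
  replace 4%Z with (2*2)%Z by reflexivity. apply rel_prime_mult; auto.
Qed.

Lemma V_sqfree (n : nat) : 0 < n ->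
  (forall e, (e * e | Z.of_nat n)%Z -> Z.abs e = 1%Z) -> V n = n.
Proof.
  intros Hn H. apply V_full. intros a Ha. apply reg_of_cond; auto.
Qed.

Lemma A_close (N : nat) (eps : R) : (0 < eps)%R ->
  exists n, N <= n /\ setA n /\ (ratio n < 1 + eps)%R.
Proof.
  intros Heps. destruct (INR_unbounded (/ eps)) as [k Hk].
  destruct (density 4 1 4 2 4 (N + k + 1)) as [j [Hj Hgood]]; try lia.
  - intros k0 j _. apply odd_gcd4.
  - intros k0 j _. apply odd_gcd4.
  - set (n := 4 * j + 1).
    assert (V1 : V n = n).
    { apply V_sqfree. unfold n; lia. replace (Z.of_nat n) with (4 * Z.of_nat j + 1)%Z by (unfold n; lia).
      apply sqfree_of. lia. intros [t Ht]. lia. intros k0; apply Hgood. }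
    assert (V2 : V (n + 1) = n + 1).
    { apply V_sqfree. lia. replace (Z.of_nat (n + 1)) with (4 * Z.of_nat j + 2)%Z by (unfold n; lia).
      apply sqfree_of. lia. intros [t Ht]. lia. intros k0; apply Hgood. }
    assert (Hr : ratio n = (1 + / INR n)%R).
    { unfold ratio. rewrite V1, V2, plus_INR. simpl INR. field. apply not_0_INR. unfold n; lia. }
    assert (Hn0 : (0 < INR n)%R) by (apply lt_0_INR; unfold n; lia).
    assert (Hnk : (INR k <= INR n)%R) by (apply le_INR; unfold n; lia).
    exists n. split; [unfold n; lia|]. split; [split; [unfold n; lia|]|]; rewrite Hr.
    + assert (0 < / INR n)%R by (apply Rinv_0_lt_compat; auto). lra.
    + assert (/ INR n < eps)%R.
      { replace eps with (/ / eps)%R by (field; lra).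
        apply Rinv_lt_contravar. apply Rmult_lt_0_compat; auto. apply Rinv_0_lt_compat; auto. lra. }
      lra.
Qed.

Lemma big_prime (P : nat) : exists p : nat, (P < p)%nat /\ forall d k, p = (k*d)%nat -> d = 1%nat \/ d = p.
Proof.
  destruct (prime.prime_above P) as [p Hp Hpr].
  exists p. split. { apply (ssrbool.elimT ssrnat.ltP). exact Hp. }
  intros d k E.
  destruct (ssrbool.elimT prime.primeP Hpr) as [_ H].
  assert (Hd : is_true (div.dvdn d p)).
  { apply (ssrbool.introT div.dvdnP). exists k. rewrite E. reflexivity. }
  specialize (H d Hd).
  destruct (ssrbool.elimT ssrbool.orP H) as [H1|H1]; [left|right];
  exact (ssrbool.elimT (@eqtype.eqP ssrnat.Datatypes_nat__canonical__eqtype_Equality _ _) H1).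
Qed.

Lemma B_close (N : nat) (eps : R) : (0 < eps <= 1)%R ->
  exists n, N <= n /\ setB n /\ (1 - eps < ratio n)%R.
Proof.
  intros Heps. destruct (INR_unbounded (/ eps)) as [k Hk].
  destruct (big_prime (k + 3)) as [p [Hp Hpr]].
  assert (Hpz : forall g, (0 <= g)%Z -> (g | Z.of_nat p)%Z -> g = 1%Z \/ g = Z.of_nat p).
  { intros g Hg [t Ht].
    assert (0 < g)%Z. { destruct (Z.eq_dec g 0); [subst; lia|lia]. }
    assert (0 < t)%Z by nia.
    destruct (Hpr (Z.to_nat g) (Z.to_nat t)) as [E|E].
    - apply Nat2Z.inj. rewrite Nat2Z.inj_mul, !Z2Nat.id by lia. lia.
    - left. lia.
    - right. rewrite <- E. rewrite Z2Nat.id; lia. }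
  set (P2 := p * p).
  assert (HP2 : (1 <= Z.of_nat P2)%Z) by (unfold P2; nia).
  destruct (density 4 2 (4 * Z.of_nat P2) (2 * Z.of_nat P2 - 1) (4 * P2) N) as [j [Hj Hgood]].
  - unfold P2; nia.
  - intros j. rewrite Nat2Z.inj_mul. nia.
  - intros j. rewrite Nat2Z.inj_mul. nia.
  - intros k0 j _. apply odd_gcd4.
  - intros k0 j [t Ht]. apply Zgcd_1_rel_prime. apply rel_prime_mult.
    + apply Zgcd_1_rel_prime, odd_gcd4.
    + apply bezout_rel_prime. apply Bezout_intro with (- t)%Z (4 * Z.of_nat j + 2)%Z. lia.
  - set (m := 4 * j + 2). set (M := P2 * m). set (n := M - 1).
    assert (HM : 1 <= n) by (unfold n, M, m, P2; nia).
    assert (Hn1 : n + 1 = M) by (unfold n; lia).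
    assert (Zn : Z.of_nat n = (4 * Z.of_nat P2 * Z.of_nat j + (2 * Z.of_nat P2 - 1))%Z).
    { unfold n, M, m. rewrite Nat2Z.inj_sub by lia. rewrite Nat2Z.inj_mul. lia. }
    assert (V1 : V n = n).
    { apply V_sqfree. lia. rewrite Zn. apply sqfree_of. unfold P2; nia.
      intros [t Ht]. lia. intros k0; apply Hgood. }
    assert (Sm : forall e, (e * e | Z.of_nat m)%Z -> Z.abs e = 1%Z).
    { unfold m. replace (Z.of_nat (4 * j + 2)) with (4 * Z.of_nat j + 2)%Z by lia.
      apply sqfree_of. lia. intros [t Ht]. lia. intros k0; apply Hgood. }
    assert (Vlo : M - p * m <= V M).
    { eapply Nat.le_trans. 2: apply (V_lower M (fun a => negb (a mod p =? 0))).
      - pose proof (filter_split (fun a => a mod p =? 0) (seq 1 M)).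
        pose proof (count_mult p M ltac:(lia)).
        rewrite length_seq in H.
        replace (M / p) with (p * m) in H0. lia.
        unfold M, P2. replace (p * p * m) with ((p * m) * p) by ring. rewrite Nat.div_mul; lia.
      - intros a Ha Ga. apply reg_of_cond. unfold M, m, P2; nia.
        intros e He1 He2.
        assert (Rg : rel_prime e (Z.of_nat p)).
        { apply Zgcd_1_rel_prime.
          destruct (Hpz (Z.gcd e (Z.of_nat p)) (Z.gcd_nonneg _ _) (Z.gcd_divide_r _ _)) as [E|E]; auto.
          exfalso. assert (D : (Z.of_nat p | Z.of_nat a)%Z).
          { rewrite <- E at 1. apply Z.divide_trans with e; auto. apply Z.gcd_divide_l. }
          apply Z.mod_divide in D; [|lia]. rewrite <- Nat2Z.inj_mod in D.
          assert (a mod p = 0) by lia. rewrite H in Ga. discriminate. }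
        assert (R2 : rel_prime (e * e) (Z.of_nat p * Z.of_nat p)).
        { apply rel_prime_sym. apply rel_prime_mult; apply rel_prime_sym; apply rel_prime_mult; auto. }
        apply Sm. apply Gauss with (Z.of_nat p * Z.of_nat p)%Z; auto.
        replace (Z.of_nat p * Z.of_nat p * Z.of_nat m)%Z with (Z.of_nat M) by (unfold M, P2; lia). exact He2. }
    assert (Vhi : V M + 2 <= M).
    { apply (V_upper M (p :: 2 * p :: nil)).
      - constructor. simpl. intros [H|[]]; lia. constructor. simpl; tauto. constructor.
      - intros a Ha. 
        assert (Hd : (Z.of_nat p * Z.of_nat p | Z.of_nat M)%Z).
        { exists (Z.of_nat m). unfold M, P2. lia. }
        simpl in Ha. destruct Ha as [<-|[<-|[]]]; split; try (unfold M, m, P2; nia).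
        + apply nonreg with (Z.of_nat p); auto. apply Z.divide_refl.
          intros [t Ht]. assert (E : (Z.of_nat p * (t * Z.of_nat p - 1) = 0)%Z) by lia.
          apply Z.mul_eq_0 in E. destruct E as [E|E]; [lia|].
          assert (t * Z.of_nat p = 1)%Z by lia. apply Z.eq_mul_1 in H. lia.
        + apply nonreg with (Z.of_nat p); auto. exists 2%Z. lia.
          intros [t Ht]. replace (Z.of_nat (2 * p)) with (Z.of_nat p * 2)%Z in Ht by lia.
          assert (E : (Z.of_nat p * (t * Z.of_nat p - 2) = 0)%Z) by lia.
          apply Z.mul_eq_0 in E. destruct E as [E|E]; [lia|].
          assert (Ht2 : (t * Z.of_nat p = 2)%Z) by lia.
          assert (Hp4 : (4 <= Z.of_nat p)%Z) by lia.
          destruct (Z.lt_trichotomy t 0) as [T|[T|T]]; nia. }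
    exists n. split; [unfold n, M, m, P2; nia|].
    unfold setB, ratio. rewrite V1, Hn1.
    assert (Hy : (0 < INR n)%R) by (apply lt_0_INR; lia).
    assert (Rlo : (INR M - INR p * INR m <= INR (V M))%R).
    { rewrite <- mult_INR, <- minus_INR. apply le_INR; exact Vlo. unfold M, P2; nia. }
    assert (Rhi : (INR (V M) < INR n)%R).
    { apply lt_INR. lia. }
    assert (RM : INR M = (INR p * INR p * INR m)%R) by (unfold M, P2; rewrite !mult_INR; ring).
    assert (Rn : INR n = (INR M - 1)%R) by (rewrite <- Hn1, plus_INR; simpl; ring).
    assert (Rp : (eps * INR p > 1)%R).
    { assert (INR k < INR p)%R by (apply lt_INR; lia).
      assert (Hq : (/ eps < INR p)%R) by lra.
      apply Rmult_lt_compat_l with (r := eps) in Hq; [|lra]. rewrite Rinv_r in Hq; lra. }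
    assert (Rm : (2 <= INR m)%R) by (replace 2%R with (INR 2) by (simpl; ring); apply le_INR; unfold m; lia).
    assert (Rp4 : (4 <= INR p)%R) by (replace 4%R with (INR 4) by (simpl; ring); apply le_INR; lia).
    split; [split; [exact HM|]|].
    + unfold Rdiv. apply Rmult_lt_reg_r with (INR n); auto.
      rewrite Rmult_assoc, Rinv_l by lra. lra.
    + unfold Rdiv. apply Rmult_lt_reg_r with (INR n); auto.
      rewrite Rmult_assoc, Rinv_l by lra.
      assert (0 < (eps * INR p - 1) * (INR p * INR m))%R by (apply Rmult_lt_0_compat; nra).
      rewrite Rn, RM in *. nra.
Qed.

Open Scope R_scope.

Lemma glbA (N : nat) : is_glb (tail_vals setA ratio N) 1.
Proof.
  split.
  - intros x [n [Hn [[_ Hr] ->]]]. lra.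
  - intros b Hb. destruct (Rle_lt_dec b 1) as [H|H]; auto.
    destruct (A_close N (b - 1)) as [n [Hn [HA Hr]]]; [lra|].
    assert (b <= ratio n) by (apply Hb; exists n; auto). lra.
Qed.

Lemma lubB (N : nat) : is_lub (tail_vals setB ratio N) 1.
Proof.
  split.
  - intros x [n [Hn [[_ Hr] ->]]]. lra.
  - intros b Hb. destruct (Rle_lt_dec 1 b) as [H|H]; auto.
    destruct (B_close N (Rmin (1 - b) 1)) as [n [Hn [HB Hr]]].
    { split. apply Rmin_glb_lt; lra. apply Rmin_r. }
    assert (ratio n <= b) by (apply Hb; exists n; auto).
    assert (Rmin (1 - b) 1 <= 1 - b) by apply Rmin_l. lra.
Qed.

Theorem proposition2 :
  infinite_nat_set setA /\ infinite_nat_set setB /\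
  is_liminf_on setA ratio 1 /\ is_limsup_on setB ratio 1.
Proof.
  split; [|split; [|split]].
  - intros N. destruct (A_close N 1) as [n [Hn [HA _]]]; [lra|]. exists n; auto.
  - intros N. destruct (B_close N 1) as [n [Hn [HB _]]]; [lra|]. exists n; auto.
  - split.
    + intros y [N HN]. destruct HN as [H1 H2]. destruct (glbA N) as [G1 G2].
      apply G2. exact H1.
    + intros b Hb. apply Hb. exists 0%nat. apply glbA.
  - split.
    + intros y [N HN]. destruct HN as [H1 H2]. destruct (lubB N) as [G1 G2].
      apply G2. exact H1.
    + intros b Hb. apply Hb. exists 0%nat. apply lubB.
Qed.
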